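(* Let $G$ be a prime $\{P_5,\overline{P_5},C_5\}$-free graph. Then $G$ has an antisimplicial vertex, or $G$ admits a 1-join.
   Context: All graphs are finite and simple. $P_n$ is the path on $n$ vertices, $C_n$ the cycle of length $n$, $\overline{G}$ the complement. $G$ is $H$-free if it has no induced subgraph isomorphic to $H$. A vertex $b\notin X$ is mixed on $X$ if it has both a neighbor and a non-neighbor in $X$. A homogeneous set is a set $X\subseteq V(G)$ with $1<|X|<|V(G)|$ such that no vertex outside $X$ is mixed on $X$. $G$ is prime if $|V(G)|\ge4$ and has no homogeneous set. A vertex $v$ is antisimplicial if $V(G)\setminus N(v)$ is a stable set. $G$ admits a 1-join if $V(G)$ can be partitioned into four non-empty pairwise disjoint sets $(A,B,C,D)$ such that $A$ is anticomplete to $C\cup D$ (no edges between them), and $B$ is complete to $C$ (all edges present) and anticomplete to $D$. *)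

(* Defs.v *)
From mathcomp Require Import all_boot.
Set Implicit Arguments. Unset Strict Implicit. Unset Printing Implicit Defensive.

Definition simple_graph (T : finType) (e : rel T) : Prop :=
  symmetric e /\ irreflexive e.

Definition P5_adj (i j : 'I_5) : bool := (i.+1 == j :> nat) || (j.+1 == i :> nat).
Definition coP5_adj (i j : 'I_5) : bool := (i != j) && ~~ P5_adj i j.
Definition C5_adj (i j : 'I_5) : bool :=
  P5_adj i j || ((i == 0 :> nat) && (j == 4 :> nat)) || ((i == 4 :> nat) && (j == 0 :> nat)).

Definition induced_sub (T : finType) (e : rel T) (k : nat) (h : rel 'I_k) : Prop :=
  exists f : 'I_k -> T, injective f /\ forall i j, e (f i) (f j) = h i j.

Definition H_free (T : finType) (e : rel T) (k : nat) (h : rel 'I_k) : Prop :=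
  ~ induced_sub e h.

Definition mixed (T : finType) (e : rel T) (X : {set T}) (b : T) : bool :=
  (b \notin X) && [exists x in X, e b x] && [exists x in X, ~~ e b x].

Definition homogeneous (T : finType) (e : rel T) (X : {set T}) : bool :=
  (1 < #|X|) && (#|X| < #|T|) && [forall b, ~~ mixed e X b].

Definition prime_graph (T : finType) (e : rel T) : Prop :=
  4 <= #|T| /\ forall X : {set T}, ~~ homogeneous e X.

Definition nbhd (T : finType) (e : rel T) (v : T) : {set T} := [set u | e v u].

Definition stable (T : finType) (e : rel T) (S : {set T}) : bool :=
  [forall x in S, forall y in S, ~~ e x y].

Definition antisimplicial (T : finType) (e : rel T) (v : T) : bool :=
  stable e (~: nbhd e v).

Definition complete_to (T : finType) (e : rel T) (X Y : {set T}) : bool :=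
  [forall x in X, forall y in Y, e x y].
Definition anticomplete_to (T : finType) (e : rel T) (X Y : {set T}) : bool :=
  [forall x in X, forall y in Y, ~~ e x y].

Definition one_join (T : finType) (e : rel T) : Prop :=
  exists A B C D : {set T},
    [/\ A != set0, B != set0, C != set0 & D != set0] /\
    [/\ [disjoint A & B], [disjoint A & C] & [disjoint A & D]] /\
    [/\ [disjoint B & C], [disjoint B & D] & [disjoint C & D]] /\
    A :|: B :|: C :|: D = [set: T] /\
    [/\ anticomplete_to e A (C :|: D), complete_to e B C & anticomplete_to e B D].

(* Main.v *)
Require Import Defs.
From mathcomp Require Import all_boot.
Set Implicit Arguments. Unset Strict Implicit. Unset Printing Implicit Defensive.


Definition P5pat (T : finType) (r : rel T) := forall a b c d e : T,
  r a b -> r b c -> r c d -> r d e ->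
  ~~ r a c -> ~~ r a d -> ~~ r a e -> ~~ r b d -> ~~ r b e -> ~~ r c e -> False.
Definition C5pat (T : finType) (r : rel T) := forall a b c d e : T,
  r a b -> r b c -> r c d -> r d e -> r e a ->
  ~~ r a c -> ~~ r a d -> ~~ r b d -> ~~ r b e -> ~~ r c e -> False.
Definition Hpat (T : finType) (r : rel T) := forall a b c d e : T,
  r a b -> r b c -> r c d -> r d a -> r e a -> r e b ->
  ~~ r a c -> ~~ r b d -> ~~ r e c -> ~~ r e d -> False.

Record good (T : finType) (r : rel T) : Prop := Good {
  gsym : symmetric r; girr : irreflexive r;
  gP5 : P5pat r; gC5 : C5pat r; gH : Hpat r }.

Ltac sr hr := solve [ done | rewrite (gsym hr); done
  | match goal with H : _ = false |- _ => rewrite H; done end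
  | rewrite (gsym hr); match goal with H : _ = false |- _ => rewrite H; done end ].


Definition mid (T : finType) (r : rel T) (W : {set T}) (s : T) : Prop :=
  exists p q t, [/\ p \in W, q \in W, t \in W, r p s & r s q] /\
     [/\ ~~ r p q, r q t, ~~ r t s, ~~ r t p & (p != q) && (t != s)].
Definition NN (T : finType) (r : rel T) (W : {set T}) x := [set y in W | (y != x) && ~~ r x y].
Definition NB (T : finType) (r : rel T) (W : {set T}) x := [set y in W | r x y].
Definition rA (T : finType) (r : rel T) (A : {set T}) : rel T := fun u v => [&& u \in A, v \in A & r u v].
Definition cmpnt (T : finType) (r : rel T) (A : {set T}) a := [set b | connect (rA r A) a b].
Definition att (T : finType) (r : rel T) (W : {set T}) x (K : {set T}) :=
  [set y in NB r W x | [exists k in K, r y k]].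

Lemma rA_sym (T : finType) (r : rel T) (A : {set T}) : symmetric r -> symmetric (rA r A).
Proof. by move=> hs u v; rewrite /rA hs; case: (u \in A); case: (v \in A). Qed.

Lemma comp_refl (T : finType) (r : rel T) (A : {set T}) (a : T) : a \in cmpnt r A a.
Proof. by rewrite inE connect0. Qed.

Lemma comp_sub (T : finType) (r : rel T) (A : {set T}) (a b : T) : symmetric r ->
  a \in A -> b \in cmpnt r A a -> b \in A.
Proof.
move=> hs aA; rewrite inE => /(closed_connect (intro_closed (sym_connect_sym (rA_sym A hs)) _)).
move=> <- //; by move=> u v /and3P[].
Qed.

Lemma comp_sym (T : finType) (r : rel T) (A : {set T}) (a b : T) : symmetric r ->
  b \in cmpnt r A a -> a \in cmpnt r A b.
Proof. by move=> hs; rewrite !inE (sym_connect_sym (rA_sym A hs)). Qed.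

Lemma comp_trans (T : finType) (r : rel T) (A : {set T}) (a b c : T) :
  b \in cmpnt r A a -> c \in cmpnt r A b -> c \in cmpnt r A a.
Proof. rewrite !inE; exact: connect_trans. Qed.

Lemma comp_closed (T : finType) (r : rel T) (A : {set T}) (a b c : T) : symmetric r -> a \in A ->
  b \in cmpnt r A a -> c \in A -> r b c -> c \in cmpnt r A a.
Proof.
move=> hs aA bK cA rbc; apply: (comp_trans bK); rewrite inE connect1 //.
by rewrite /rA (comp_sub hs aA bK) cA.
Qed.

Lemma comp_conn (T : finType) (r : rel T) (A : {set T}) (a : T) (B : {set T}) (b : T) : symmetric r -> a \in A ->
  b \in B -> b \in cmpnt r A a ->
  (forall u v, u \in B -> v \in A -> r u v -> v \in B) ->
  forall c, c \in cmpnt r A a -> c \in B.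
Proof.
move=> hs aA bB bK hB c cK.
have cb : c \in cmpnt r A b by apply: comp_trans (comp_sym hs bK) cK.
move: cb; rewrite inE => /(closed_connect (intro_closed (sym_connect_sym (rA_sym A hs)) _)) <- //.
move=> u v /and3P[uA vA ruv] uB; exact: hB ruv.
Qed.

Lemma noP5 (T : finType) (r : rel T) (hr : good r) (a b c d e : T) :
  r a b -> r b c -> r c d -> r d e ->
  ~~ r a c -> ~~ r a d -> ~~ r a e -> ~~ r b d -> ~~ r b e -> ~~ r c e -> False.
Proof. exact: (gP5 hr). Qed.
Lemma noC5 (T : finType) (r : rel T) (hr : good r) (a b c d e : T) :
  r a b -> r b c -> r c d -> r d e -> r e a ->
  ~~ r a c -> ~~ r a d -> ~~ r b d -> ~~ r b e -> ~~ r c e -> False.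
Proof. exact: (gC5 hr). Qed.
Lemma noH (T : finType) (r : rel T) (hr : good r) (a b c d e : T) :
  r a b -> r b c -> r c d -> r d a -> r e a -> r e b ->
  ~~ r a c -> ~~ r b d -> ~~ r e c -> ~~ r e d -> False.
Proof. exact: (gH hr). Qed.
Arguments noP5 [T r] hr a b c d e.
Arguments noC5 [T r] hr a b c d e.
Arguments noH [T r] hr a b c d e.



Lemma compar (T : finType) (r : rel T) (hr : good r) x p q m1 m2 :
  r x p -> r x q -> ~~ r p q -> ~~ r x m1 -> ~~ r x m2 ->
  r p m1 -> ~~ r q m1 -> r q m2 -> ~~ r p m2 -> False.
Proof.
move=> xp xq npq nxm1 nxm2 pm1 nqm1 qm2 npm2.
case h: (r m1 m2).
  by apply: (noC5 hr x p m1 m2 q); sr hr.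
by apply: (noP5 hr m1 p x q m2); first [sr hr | rewrite h].
Qed.

Lemma NNE (T : finType) (r : rel T) (W : {set T}) x y :
  (y \in NN r W x) = [&& y \in W, y != x & ~~ r x y].
Proof. by rewrite inE. Qed.
Lemma NBE (T : finType) (r : rel T) (W : {set T}) x y :
  (y \in NB r W x) = (y \in W) && r x y.
Proof. by rewrite inE. Qed.
Lemma attE (T : finType) (r : rel T) (W : {set T}) x K y :
  (y \in att r W x K) = [&& y \in W, r x y & [exists k in K, r y k]].
Proof. by rewrite !inE andbA. Qed.
Arguments compar [T r] hr x p q m1 m2.



Lemma lift (T : finType) (r : rel T) (hr : good r) (W : {set T}) x k0 :
  x \in W -> k0 \in NN r W x ->
  (forall t, t \in NN r W x ->
      att r W x (cmpnt r (NN r W x) t) \subset att r W x (cmpnt r (NN r W x) k0) ->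
      att r W x (cmpnt r (NN r W x) k0) \subset att r W x (cmpnt r (NN r W x) t)) ->
  forall s, s \in cmpnt r (NN r W x) k0 ->
  ~ mid r (cmpnt r (NN r W x) k0 :|: att r W x (cmpnt r (NN r W x) k0) :|: [set x]) s ->
  ~ mid r W s.
Proof.
move=> xW k0M hmin s sK semi.
set M := NN r W x in k0M hmin sK semi *.
set K := cmpnt r M k0 in hmin sK semi *.
set S := att r W x K in hmin semi *.
have hs := gsym hr.
have KM : forall v, v \in K -> v \in M := fun v => comp_sub hs k0M.
have Mfacts : forall v, v \in M -> [/\ v \in W, v != x & ~~ r x v].
  by move=> v; rewrite NNE => /and3P[].
have sM := KM s sK. case: (Mfacts s sM) => sW sx nxs.
have nbK : forall k v, k \in K -> v \in W -> r k v -> (v \in K) || (v \in S).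
  move=> k v kK vW rkv. case rxv: (r x v).
    apply/orP; right; rewrite attE vW rxv /=; apply/existsP; exists k; rewrite kK /=; sr hr.
  apply/orP; left; apply: (comp_closed hs k0M kK _ rkv).
  rewrite NNE vW rxv andbT. apply/eqP=> E; subst v.
  case: (Mfacts k (KM k kK)) => _ _; by rewrite hs rkv.
have outK : forall t k, t \in W -> t \notin K -> t \notin S -> t != x -> k \in K -> ~~ r t k.
  move=> t k tW tK tS tx kK; apply/negP=> rtk.
  have H := nbK k t kK tW; rewrite hs rtk in H; case/orP: (H isT) => H'.
    by rewrite H' in tK.
  by rewrite H' in tS.
move=> [p [q [t [[pW qW tW rps rsq] [npq rqt nts ntp /andP[pq ts]]]]]].
have pKS : (p \in K) || (p \in S) by apply: (nbK s p sK pW); rewrite hs.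
have qKS := nbK s q sK qW rsq.
have W'E : forall v, (v \in K :|: S :|: [set x]) = [|| v \in K, v \in S | v == x].
  by move=> v; rewrite !inE orbA.
case tW' : (t \in K :|: S :|: [set x]).
  apply: semi; exists p, q, t; split; first split => //.
  - by rewrite W'E; case/orP: pKS => ->; rewrite ?orbT.
  - by rewrite W'E; case/orP: qKS => ->; rewrite ?orbT.
  by split => //; rewrite pq ts.
move: tW'; rewrite W'E => /norP[tK /norP[tS tx]].
have tnK := outK t _ tW tK tS tx.
have qS : q \in S.
  case/orP: qKS => // qK; by rewrite hs (negbTE (tnK q qK)) in rqt.
have rxq : r x q by move: qS; rewrite attE => /and3P[].
case/orP: pKS => [pK|pS].
  apply: semi; exists p, q, x; split; first split => //.
  - by rewrite W'E pK.
  - by rewrite W'E qS orbT.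
  - by rewrite W'E eqxx !orbT.
  case: (Mfacts p (KM p pK)) => _ _ nxp.
  split => //; first [sr hr | by rewrite pq eq_sym sx].
have rxp : r x p by move: pS; rewrite attE => /and3P[].
case rxt: (r x t).
  by apply: (noH hr q x p s t); first [sr hr | by rewrite hs ].
have tM : t \in M by rewrite NNE tW tx rxt.
have nxt : ~~ r x t by rewrite rxt.
set K' := cmpnt r M t.
have cmp : forall m, m \in M -> r p m -> r q m.
  move=> m mM rpm; apply/negPn/negP => nqm.
  case: (Mfacts m mM) => _ _ nxm.
  by apply: (compar hr x p q m t) => //; sr hr.
have K'M : forall v, v \in K' -> v \in M := fun v => comp_sub hs tM.
have K'nK : forall v, v \in K' -> v \notin K.
  move=> v vK'; apply/negP => vK; move/negP: tK; apply.
  exact: comp_trans vK (comp_sym hs vK').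
have K'ns : forall v, v \in K' -> ~~ r v s.
  move=> v vK'; apply/negP=> rvs; move/negP: (K'nK v vK'); apply.
  by apply: (comp_closed hs k0M sK (K'M v vK')); rewrite hs.
have tK' : t \in K' := comp_refl _ _ _.
case: (boolP [exists k in K', r p k]) => pA.
  case/existsP: pA => a0 /andP[a0K' rpa0].
  set B := [set w in K' | r q w && ~~ r p w].
  have tB : t \in B by rewrite inE tK' rqt; sr hr.
  have H := comp_conn hs tM tB tK'.
  have a0B : a0 \in B.
    apply: H a0K' => u v uB vM ruv.
    move: uB; rewrite inE => /and3P[uK' rqu nrpu].
    have vK' : v \in K' := comp_closed hs tM uK' vM ruv.
    have nsu : ~~ r s u by rewrite hs; apply: K'ns.
    have nsv : ~~ r s v by rewrite hs; apply: K'ns.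
    case rpv : (r p v).
      have rqv := cmp v vM rpv.
      by exfalso; apply: (noH hr q v p s u); first [sr hr | by rewrite hs].
    case rqv : (r q v); first by rewrite inE vK' rqv rpv.
    by exfalso; apply: (noP5 hr v u q s p); first [sr hr | by rewrite hs | by rewrite hs rpv].
  by move: a0B; rewrite inE => /and3P[_ _]; rewrite rpa0.
have npK' : forall k, k \in K' -> ~~ r p k.
  by move=> k kK'; apply/negP => rpk; move/negP: pA; apply; apply/existsP; exists k; rewrite kK'.
have : ~~ (att r W x K' \subset S).
  apply/negP => sub; have := hmin t tM sub => /subsetP /(_ p pS).
  by rewrite attE pW rxp /= (negbTE pA).
case/subsetPn => y yA ynS.
move: yA; rewrite attE => /and3P[yW rxy /existsP[t' /andP[t'K' ryt']]].
have ynK : forall k, k \in K -> ~~ r y k.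
  move=> k kK; apply/negP=> ryk; move/negP: ynS; apply.
  rewrite attE yW rxy /=; apply/existsP; exists k; by rewrite kK.
case: (Mfacts t' (K'M t' t'K')) => _ _ nxt'.
have nst' : ~~ r s t' by rewrite hs; apply: K'ns.
have npt' := npK' t' t'K'.
have nsy : ~~ r s y by rewrite hs; apply: ynK.
have rpy : r p y.
  apply/negPn/negP => npy.
  by apply: (compar hr x p y s t') => //; sr hr.
case rqy : (r q y); case rqt' : (r q t').
- by exfalso; apply: (noH hr y q s p t'); first [sr hr | by rewrite hs].
- have nyt : ~~ r y t.
    apply/negP=> ryt.
    by apply: (noH hr q y p s t); first [sr hr | by rewrite hs].
  set Bq := [set w in K' | r q w && ~~ r y w].
  have tBq : t \in Bq by rewrite inE tK' rqt nyt.
  have H := comp_conn hs tM tBq tK'.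
  have t'B : t' \in Bq.
    apply: H t'K' => u v uB vM ruv.
    move: uB; rewrite inE => /and3P[uK' rqu nryu].
    have vK' : v \in K' := comp_closed hs tM uK' vM ruv.
    case: (Mfacts u (K'M u uK')) => _ _ nxu.
    case: (Mfacts v vM) => _ _ nxv.
    have nsu : ~~ r s u by rewrite hs; apply: K'ns.
    have nsv : ~~ r s v by rewrite hs; apply: K'ns.
    have npu := npK' u uK'. have npv := npK' v vK'.
    case ryv : (r y v); case rqv : (r q v).
    + by exfalso; apply: (noP5 hr u v y p s); first [sr hr | by rewrite hs].
    + by exfalso; apply: (noH hr y q u v x); first [sr hr | by rewrite hs].
    + by rewrite inE vK' rqv ryv.
    + by exfalso; apply: (noP5 hr v u q s p); first [sr hr | by rewrite hs].
  by move: t'B; rewrite inE => /and3P[_ _]; rewrite ryt'.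
- by exfalso; apply: (noC5 hr q s p y t'); first [sr hr | by rewrite hs].
- by exfalso; apply: (noP5 hr q s p y t'); first [sr hr | by rewrite hs].
Qed.



Lemma claim (T : finType) (r : rel T) (hr : good r) n :
  forall W : {set T}, #|W| <= n -> forall x m, x \in W -> m \in NN r W x ->
  exists2 s, s \in NN r W x & ~ mid r W s.
Proof.
have hs := gsym hr.
elim: n => [|n IH] W.
  by rewrite leqn0 => /eqP/cards0_eq -> x m; rewrite inE.
move=> Wn x m xW mM.
set M := NN r W x in mM *.
have Mfacts : forall v, v \in M -> [/\ v \in W, v != x & ~~ r x v].
  by move=> v; rewrite NNE => /and3P[].
pose F t := #|att r W x (cmpnt r M t)|.
have [k0 k0M k0min] : exists2 k0, k0 \in M & forall t, t \in M -> F k0 <= F t.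
  by case: (arg_minnP F mM) => k0 ? H; exists k0.
set K := cmpnt r M k0.
set S := att r W x K.
have hmin : forall t, t \in M -> att r W x (cmpnt r M t) \subset S ->
                  S \subset att r W x (cmpnt r M t).
  move=> t tM sub.
  have /eqP -> // : att r W x (cmpnt r M t) == S.
  by rewrite eqEcard sub (k0min t tM).
have KM : forall v, v \in K -> v \in M := fun v => comp_sub hs k0M.
have k0K : k0 \in K := comp_refl _ _ _.
have SE : forall v, (v \in S) = [&& v \in W, r x v & [exists k in K, r v k]].
  by move=> v; rewrite attE.
set W' := K :|: S :|: [set x].
have W'E : forall v, (v \in W') = [|| v \in K, v \in S | v == x].
  by move=> v; rewrite !inE orbA.
have W'W : W' \subset W.
  apply/subsetP => v; rewrite W'E => /or3P[vK|vS|/eqP->] //.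
  - by case: (Mfacts v (KM v vK)).
  - by move: vS; rewrite SE => /and3P[].
case: (boolP (W \subset W')) => [WW'|nWW']; last first.
  have ltW : #|W'| < #|W| by apply: proper_card; rewrite properE W'W nWW'.
  have xW' : x \in W' by rewrite W'E eqxx !orbT.
  case: (Mfacts k0 k0M) => k0W k0x nxk0.
  have k0M' : k0 \in NN r W' x by rewrite NNE W'E k0K k0x nxk0.
  have [s sM' semi'] := IH W' (leq_trans (ltnSE (leq_trans ltW Wn)) (leqnn n)) x k0 xW' k0M'.
  move: sM'; rewrite NNE W'E => /and3P[/or3P[sK|sS|sx] snx nxs]; last by rewrite sx in snx.
    by exists s; [apply: KM | apply: (lift hr xW k0M hmin sK semi')].
  by move: sS; rewrite SE (negbTE nxs) andbF.
have Wcl : forall v, v \in W -> [|| v \in K, v \in S | v == x].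
  by move=> v vW; rewrite -W'E; apply: (subsetP WW').
have MK : forall v, v \in M -> v \in K.
  move=> v vM; case: (Mfacts v vM) => vW vx nxv.
  case/or3P: (Wcl v vW) => // [vS|vx']; last by rewrite vx' in vx.
  by move: vS; rewrite SE (negbTE nxv) andbF.
have NBS : forall y, y \in W -> r x y -> y \in S.
  move=> y yW rxy; case/or3P: (Wcl y yW) => // [yK|/eqP yx].
    by case: (Mfacts y (KM y yK)) => _ _; rewrite rxy.
  by subst y; rewrite (girr hr) in rxy.
case: (boolP [exists y in NB r W x, [exists k in K, ~~ r y k]]) => [hB1|hB2].
  pose P y := (y \in NB r W x) && [exists k in K, ~~ r y k].
  pose G y := #|[set k in K | r y k]|.
  case/existsP: hB1 => y0 hy0.
  have [y Py ymax] : exists2 y, P y & forall y', P y' -> G y' <= G y.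
    by case: (@arg_maxnP _ y0 P G hy0) => y Py H; exists y.
  move: (Py); rewrite /P NBE => /andP[/andP[yW rxy] /existsP[k1 /andP[k1K nyk1]]].
  have yS := NBS y yW rxy.
  have F1 : forall y' k, y' \in W -> r x y' -> y' != y -> ~~ r y y' -> k \in K ->
                 ~~ r y k -> ~~ r y' k.
    move=> y' k y'W rxy' y'y nyy' kK nyk; apply/negP => ry'k.
    case: (boolP [exists k in K, ~~ r y' k]) => hy'.
      have Py' : P y' by rewrite /P NBE y'W rxy'.
      have := ymax y' Py'; apply/negP; rewrite -ltnNge /G.
      apply: proper_card; rewrite properE; apply/andP; split.
        apply/subsetP => k'; rewrite inE => /andP[k'K ryk']; rewrite inE k'K /=.
        apply/negPn/negP => ny'k'.
        case: (Mfacts k (KM k kK)) => _ _ nxk.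
        case: (Mfacts k' (KM k' k'K)) => _ _ nxk'.
        by apply: (compar hr x y' y k k') => //; sr hr.
      apply/subsetPn; exists k; first by rewrite inE kK ry'k.
      by rewrite inE kK (negbTE nyk).
    have y'K : forall k, k \in K -> r y' k.
      move=> k' k'K; apply/negPn/negP => ny'k'; move/negP: hy'; apply.
      by apply/existsP; exists k'; rewrite k'K.
    move: yS; rewrite SE => /and3P[_ _ /existsP[kn /andP[knK rykn]]].
    set Ny := [set k in K | r y k].
    have knNy : kn \in Ny by rewrite inE knK rykn.
    have := comp_conn hs k0M knNy knK => H.
    have k1Ny : k1 \in Ny.
      apply: H k1K => u v uNy vM ruv.
      move: uNy; rewrite inE => /andP[uK ryu].
      have vK : v \in K := comp_closed hs k0M uK vM ruv.
      rewrite inE vK /=; apply/negPn/negP => nyv.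
      case: (Mfacts u (KM u uK)) => _ _ nxu.
      case: (Mfacts v vM) => _ _ nxv.
      have ry'u := y'K u uK. have ry'v := y'K v vK.
      by apply: (noH hr u y' x y v); sr hr.
    by move: k1Ny; rewrite inE (negbTE nyk1) andbF.
  set K0 := [set k in K | ~~ r y k].
  have k1K0 : k1 \in K0 by rewrite inE k1K nyk1.
  set My := NN r W y.
  have MyE : forall v, (v \in My) = [&& v \in W, v != y & ~~ r y v] by move=> v; rewrite NNE.
  have K0My : forall k, k \in K0 -> k \in My.
    move=> k; rewrite inE => /andP[kK nyk].
    case: (Mfacts k (KM k kK)) => kW kx nxk.
    rewrite MyE kW nyk andbT; apply/eqP => E; subst k; by rewrite rxy in nxk.
  pose Fy t := #|att r W y (cmpnt r My t)|.
  have [k2 k2K0 k2min] : exists2 k2, k2 \in K0 & forall t, t \in K0 -> Fy k2 <= Fy t.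
    by case: (arg_minnP Fy k1K0) => k2 ? H; exists k2.
  have k2My := K0My k2 k2K0.
  set C := cmpnt r My k2.
  have k2C : k2 \in C := comp_refl _ _ _.
  have CK0 : forall c, c \in C -> c \in K0.
    apply: (comp_conn hs k2My k2K0 k2C) => u v uK0 vMy ruv.
    move: uK0; rewrite inE => /andP[uK nyu].
    move: (vMy); rewrite MyE => /and3P[vW vy nyv].
    case/or3P: (Wcl v vW) => [vK|vS|/eqP vx].
    - by rewrite inE vK nyv.
    - move: vS; rewrite SE => /and3P[_ rxv _].
      have := F1 v u vW rxv vy nyv uK nyu; by rewrite hs ruv.
    - by subst v; rewrite hs rxy in nyv.
  have CK : forall c, c \in C -> c \in K.
    by move=> c /CK0; rewrite inE => /andP[].
  have xnatt : x \notin att r W y C.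
    rewrite attE xW hs rxy /=; apply/existsP => -[c /andP[cC rxc]].
    by case: (Mfacts c (KM c (CK c cC))) => _ _; rewrite rxc.
  have hmin2 : forall t, t \in My -> att r W y (cmpnt r My t) \subset att r W y C ->
                  att r W y C \subset att r W y (cmpnt r My t).
    move=> t tMy sub.
    move: (tMy); rewrite MyE => /and3P[tW ty nyt].
    case/or3P: (Wcl t tW) => [tK|tS|/eqP tx].
    - have tK0 : t \in K0 by rewrite inE tK nyt.
      have /eqP -> // : att r W y (cmpnt r My t) == att r W y C.
      by rewrite eqEcard sub (k2min t tK0).
    - move: tS; rewrite SE => /and3P[_ rxt _].
      have : x \in att r W y (cmpnt r My t).
        rewrite attE xW hs rxy /=; apply/existsP; exists t.
        by rewrite comp_refl rxt.
      by move/(subsetP sub); rewrite (negbTE xnatt).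
    - by subst t; rewrite hs rxy in nyt.
  set W2 := C :|: att r W y C :|: [set y].
  have W2E : forall v, (v \in W2) = [|| v \in C, v \in att r W y C | v == y].
    by move=> v; rewrite !inE orbA.
  have W2W : W2 \subset W.
    apply/subsetP => v; rewrite W2E => /or3P[vC|vA|/eqP->] //.
    - by move: (K0My v (CK0 v vC)); rewrite MyE => /and3P[].
    - by move: vA; rewrite attE => /and3P[].
  have xnW2 : x \notin W2.
    rewrite W2E (negbTE xnatt) /=; apply/norP; split.
      by apply/negP => /CK /KM /Mfacts [_ /eqP].
    by apply/eqP => E; rewrite E (girr hr) in rxy.
  have ltW2 : #|W2| < #|W|.
    apply: proper_card; rewrite properE W2W /=; apply/subsetPn; exists x => //.
  have yW2 : y \in W2 by rewrite W2E eqxx !orbT.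
  have k2M2 : k2 \in NN r W2 y.
    by move: k2My; rewrite !NNE W2E k2C => /and3P[_ -> ->].
  have [s sM2 semi2] := IH W2 (leq_trans (ltnSE (leq_trans ltW2 Wn)) (leqnn n)) y k2 yW2 k2M2.
  move: sM2; rewrite NNE W2E => /and3P[/or3P[sC|sA|sy] sny nys]; last by rewrite sy in sny.
    exists s; first by apply: KM; apply: CK.
    exact: (lift hr yW k2My hmin2 sC semi2).
  by move: sA; rewrite attE (negbTE nys) andbF.
have cK : forall y k, y \in W -> r x y -> k \in K -> r y k.
  move=> y k yW rxy kK; apply/negPn/negP => nyk; move/negP: hB2; apply.
  apply/existsP; exists y; rewrite NBE yW rxy /=; apply/existsP; exists k; by rewrite kK.
have Wcl' : forall v, v \in W -> [|| v \in K, r x v | v == x].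
  move=> v vW; case/or3P: (Wcl v vW) => [->//|vS|->]; last by rewrite !orbT.
  by move: vS; rewrite SE => /and3P[_ -> _]; rewrite orbT.
case: (boolP [exists u in K, exists v in K, (u != v) && ~~ r u v]) => hK.
  case/existsP: hK => u /andP[uK /existsP[v /andP[vK /andP[uv nuv]]]].
  have xnK : x \notin K by apply/negP => /KM /Mfacts [_ /eqP].
  have KW : K \subset W by apply/subsetP => k /KM /Mfacts [].
  have ltK : #|K| < #|W|.
    by apply: proper_card; rewrite properE KW /=; apply/subsetPn; exists x.
  have vMK : v \in NN r K u by rewrite NNE vK eq_sym uv nuv.
  have [s sMK semiK] := IH K (leq_trans (ltnSE (leq_trans ltK Wn)) (leqnn n)) u v uK vMK.
  move: sMK; rewrite NNE => /and3P[sK _ _].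
  case: (Mfacts s (KM s sK)) => sW sx nxs.
  exists s; first exact: KM.
  move=> [p [q [t [[pW qW tW rps rsq] [npq rqt nts ntp /andP[pq ts]]]]]].
  apply: semiK; exists p, q, t; split; last by split => //; rewrite pq ts.
  have nbs : forall w, w \in W -> r w s -> (w \in K) || r x w.
    move=> w wW rws; case/or3P: (Wcl' w wW) => [->|->|/eqP wx]; rewrite ?orbT //.
    by subst w; rewrite rws in nxs.
  have qK : q \in K.
    case/orP: (nbs q qW (etrans (hs q _) rsq)) => // rxq.
    exfalso; case/orP: (nbs p pW rps) => [pK|rxp].
      by move: npq; rewrite hs (cK q p qW rxq pK).
    case/or3P: (Wcl' t tW) => [tK|rxt|/eqP tx].
    - by move: ntp; rewrite hs (cK p t pW rxp tK).
    - by move: nts; rewrite (cK t s tW rxt sK).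
    - by subst t; move: ntp; rewrite rxp.
  have pK : p \in K.
    case/orP: (nbs p pW rps) => // rxp.
    by move: npq; rewrite (cK p q pW rxp qK).
  have tK : t \in K.
    case/or3P: (Wcl' t tW) => [//|rxt|/eqP tx].
    - by move: nts; rewrite (cK t s tW rxt sK).
    - by subst t; case: (Mfacts q (KM q qK)) => _ _; rewrite hs rqt.
  by split.
have cl : forall u v, u \in K -> v \in K -> u != v -> r u v.
  move=> u v uK vK uv; apply/negPn/negP => nuv; move/negP: hK; apply.
  apply/existsP; exists u; rewrite uK /=; apply/existsP; exists v; by rewrite vK uv.
exists k0 => //.
case: (Mfacts k0 k0M) => k0W k0x nxk0.
move=> [p [q [t [[pW qW tW rps rsq] [npq rqt nts ntp /andP[pq ts]]]]]].
have nbs : forall w, w \in W -> r w k0 -> (w \in K) || r x w.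
  move=> w wW rws; case/or3P: (Wcl' w wW) => [->|->|/eqP wx]; rewrite ?orbT //.
  by subst w; rewrite rws in nxk0.
case/orP: (nbs p pW rps) => [pK|rxp]; case/orP: (nbs q qW (etrans (hs q _) rsq)) => [qK|rxq].
- by move: npq; rewrite (cl p q pK qK pq).
- by move: npq; rewrite hs (cK q p qW rxq pK).
- by move: npq; rewrite (cK p q pW rxp qK).
case/or3P: (Wcl' t tW) => [tK|rxt|/eqP tx].
- by move: nts; rewrite (cl t k0 tK k0K ts).
- by move: nts; rewrite (cK t k0 tW rxt k0K).
- by subst t; move: ntp; rewrite rxp.
Qed.


Definition co (T : finType) (e : rel T) : rel T := fun x y => (x != y) && ~~ e x y.

Lemma co_sym (T : finType) (e : rel T) : symmetric e -> symmetric (co e).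
Proof. by move=> es x y; rewrite /co eq_sym es. Qed.
Lemma co_irr (T : finType) (e : rel T) : irreflexive (co e).
Proof. by move=> x; rewrite /co eqxx. Qed.
Lemma coT (T : finType) (e : rel T) u v : u != v -> ~~ co e u v -> e u v.
Proof. by move=> uv; rewrite /co uv /= negbK. Qed.
Lemma coF (T : finType) (e : rel T) u v : co e u v -> e u v = false.
Proof. by case/andP => _ /negbTE. Qed.

Lemma mk_ind (T : finType) (e : rel T) (h : rel 'I_5) (a b c d f : T) :
  (forall i j : 'I_5, i != j -> exists k, h i k != h j k) ->
  (forall i j : 'I_5, e (nth a [:: a; b; c; d; f] i) (nth a [:: a; b; c; d; f] j) = h i j) ->
  induced_sub e h.
Proof.
move=> dis H; exists (fun i : 'I_5 => nth a [:: a; b; c; d; f] i); split => //.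
move=> i j fij; apply/eqP/negPn/negP => ij.
case: (dis i j ij) => k.
by rewrite -!H fij eqxx.
Qed.

Ltac dk := first [ exists (@Ordinal 5 0 isT); by compute
                 | exists (@Ordinal 5 1 isT); by compute
                 | exists (@Ordinal 5 2 isT); by compute
                 | exists (@Ordinal 5 3 isT); by compute
                 | exists (@Ordinal 5 4 isT); by compute ].
Lemma dis_coP5 : forall i j : 'I_5, i != j -> exists k, coP5_adj i k != coP5_adj j k.
Proof. move=> [[|[|[|[|[|i]]]]] Hi] [[|[|[|[|[|j]]]]] Hj] //= _; dk. Qed.
Lemma dis_C5 : forall i j : 'I_5, i != j -> exists k, C5_adj i k != C5_adj j k.
Proof. move=> [[|[|[|[|[|i]]]]] Hi] [[|[|[|[|[|j]]]]] Hj] //= _; dk. Qed.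
Lemma dis_P5 : forall i j : 'I_5, i != j -> exists k, P5_adj i k != P5_adj j k.
Proof. move=> [[|[|[|[|[|i]]]]] Hi] [[|[|[|[|[|j]]]]] Hj] //= _; dk. Qed.

Arguments mk_ind [T e] h a b c d f.

Ltac dst cs := match goal with H : is_true (co _ _ _) |- is_true (_ != _) =>
  apply: (contraTneq _ H);
  first [move=> ->; done | move=> <-; done | move=> ->; rewrite cs; done | move=> <-; rewrite cs; done] end.

Ltac fin25 es ei :=
  move=> [[|[|[|[|[|i]]]]] Hi] [[|[|[|[|[|j]]]]] Hj] //=;
  rewrite /coP5_adj /P5_adj /C5_adj /=;
  first [ by rewrite ei
        | by apply: coT | by rewrite es; apply: coT
        | by apply: coF | by rewrite es; apply: coF ].

Lemma good_co (T : finType) (e : rel T) :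
  simple_graph e -> H_free e P5_adj -> H_free e coP5_adj -> H_free e C5_adj -> good (co e).
Proof.
move=> [es ei] fP5 fcoP5 fC5.
have cs := co_sym es.
split; [exact: cs | exact: co_irr | | |].
- move=> a b c d f hab hbc hcd hdf nac nad naf nbd nbf ncf.
  have ac : a != c by dst cs.
  have ad : a != d by dst cs.
  have af : a != f by dst cs.
  have bd : b != d by dst cs.
  have bf : b != f by dst cs.
  have cf : c != f by dst cs.
  apply: fcoP5; apply: (mk_ind coP5_adj a b c d f dis_coP5).
  fin25 es ei.
- move=> a b c d f hab hbc hcd hdf hfa nac nad nbd nbf ncf.
  have ac : a != c by dst cs.
  have ad : a != d by dst cs.
  have bd : b != d by dst cs.
  have bf : b != f by dst cs.
  have cf : c != f by dst cs.
  apply: fC5; apply: (mk_ind C5_adj a c f b d dis_C5).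
  fin25 es ei.
- move=> a b c d f hab hbc hcd hda hfa hfb nac nbd nfc nfd.
  have ac : a != c by dst cs.
  have bd : b != d by dst cs.
  have fc : f != c by dst cs.
  have fd : f != d by dst cs.
  apply: fP5; apply: (mk_ind P5_adj a c f d b dis_P5).
  fin25 es ei.
Qed.


Theorem lemma2p7 (T : finType) (e : rel T) :
  simple_graph e ->
  prime_graph e ->
  H_free e P5_adj -> H_free e coP5_adj -> H_free e C5_adj ->
  (exists v : T, antisimplicial e v) \/ one_join e.
Proof.
move=> sg [card4 prm] fP5 fcoP5 fC5; left.
have [es ei] := sg.
have hr := good_co sg fP5 fcoP5 fC5.
have [s semi] : exists s, ~ mid (co e) setT s.
  case: (boolP [exists x, exists m, m \in NN (co e) setT x]).
    case/existsP => x /existsP [m hm].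
    have [s _ semi] := claim hr (leqnn #|[set: T]|) (in_setT x) hm.
    by exists s.
  move=> hn.
  have : 0 < #|T| by apply: leq_trans card4.
  case/card_gt0P => s0 _; exists s0.
  move=> [p [q [t [[pW qW tW rps rsq] [npq rqt nts ntp /andP[pq ts]]]]]].
  move/negP: hn; apply; apply/existsP; exists p; apply/existsP; exists q.
  by rewrite NNE in_setT eq_sym pq.
exists s.
apply/forallP => a; apply/implyP; rewrite !inE => nsa.
apply/forallP => b; apply/implyP; rewrite !inE => nsb.
apply/negP => eab.
case: (eqVneq a s) => [as_|a_s].
  by subst a; rewrite eab in nsb.
case: (eqVneq b s) => [bs|b_s].
  by subst b; rewrite es eab in nsa.
set A := [set y | (y != s) && ~~ e s y].
have aA : a \in A by rewrite inE a_s nsa.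
have bA : b \in A by rewrite inE b_s nsb.
set K := cmpnt e A a.
have aK : a \in K := comp_refl _ _ _.
have bK : b \in K := comp_closed es aA aK bA eab.
have KA : forall v, v \in K -> v \in A := fun v => comp_sub es aA.
have sK : s \notin K by apply/negP => /KA; rewrite inE eqxx.
have : ~~ homogeneous e K := prm K.
rewrite /homogeneous.
have -> : 1 < #|K|.
  have ab : a != b by apply/eqP => E; subst b; rewrite ei in eab.
  have : [set a; b] \subset K by apply/subsetP => v; rewrite in_setU1 in_set1 => /orP[]/eqP->.
  by move/subset_leq_card; rewrite cards2 ab.
have -> : #|K| < #|T|.
  rewrite -cardsT; apply: proper_card; rewrite properE subsetT /=.
  by apply/subsetPn; exists s.
rewrite /= negb_forall => /existsP [u]; rewrite negbK /mixed.
case/andP => /andP [uK /existsP[k1 /andP[k1K euk1]]] /existsP[k2 /andP[k2K neuk2]].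
have uA : u \notin A.
  apply/negP => uA; move/negP: uK; apply.
  by apply: (comp_closed es aA k1K uA); rewrite es.
have esu : e s u.
  move: (uA); rewrite inE negb_and !negbK => /orP[/eqP us|//].
  by subst u; move: (KA k1 k1K); rewrite inE euk1 andbF.
set Ny := [set k in K | e u k].
have k1Ny : k1 \in Ny by rewrite inE k1K euk1.
have H := comp_conn es aA k1Ny k1K.
have k2Ny : k2 \in Ny.
  apply: H k2K => u' v u'Ny vA eu'v.
  move: u'Ny; rewrite inE => /andP[u'K euu'].
  have vK : v \in K := comp_closed es aA u'K vA eu'v.
  rewrite inE vK /=; apply/negPn/negP => neuv.
  apply: semi; exists u', v, u; split; first split; rewrite ?in_setT //.
  - move: (KA u' u'K); rewrite inE => /andP[u's nsu'].
    by rewrite /co u's es.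
  - move: vA; rewrite inE => /andP[vs nsv].
    by rewrite /co eq_sym vs.
  split.
  - by rewrite /co eu'v andbF.
  - rewrite /co es neuv andbT; apply/eqP => E; subst v; by rewrite vA in uA.
  - by rewrite /co es esu andbF.
  - by rewrite /co euu' andbF.
  - rewrite andbC; apply/andP; split.
      by apply/eqP => E; subst u; move: esu; rewrite ei.
    by apply/eqP => E; subst v; rewrite ei in eu'v.
by move: k2Ny; rewrite inE (negbTE neuk2) andbF.
Qed.
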